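(* Let $n\ge 3$ and let $S$ be a double-$n$ string with diameter $d<n/2$, whose symbols are labeled $1,\dots,n$ in the order of their first occurrence in $S$. Then for each $1\le i\le d+1$, the number of symbols $j\in\{1,\dots,d+1\}\setminus\{i\}$ whose second occurrence lies at position-distance at most $d$ from the second occurrence of $i$ is at most $3d+i-n$.
   Context: A double-$n$ string is a string of length $2n$ over an alphabet of $n$ symbols in which each symbol appears exactly twice. Positions in the string are numbered $1,\dots,2n$; the position-distance between two entries is the absolute difference of their positions. The distance between two distinct symbols is the minimum position-distance between an occurrence of the first and an occurrence of the second. The diameter of a double-$n$ string is the maximum of the distance over all pairs of distinct symbols. *)

(* Defs.v *)
From mathcomp Require Import all_boot all_order all_algebra.
Set Implicit Arguments. Unset Strict Implicit. Unset Printing Implicit Defensive.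

(* Strings are [seq nat]; symbols are 1..n.  Positions are 0-indexed
   (position p here = position p+1 in the paper); distances are unaffected. *)

Definition pdist (p q : nat) : nat := (p - q) + (q - p).

Definition double_string (n : nat) (s : seq nat) : Prop :=
  size s = 2 * n /\ all (fun x => 0 < x <= n) s /\
  forall a, 0 < a <= n -> count_mem a s = 2.

Definition occ (s : seq nat) (a : nat) : seq nat :=
  [seq p <- iota 0 (size s) | nth 0 s p == a].

Definition first_occ (s : seq nat) (a : nat) : nat := nth 0 (occ s a) 0.
Definition second_occ (s : seq nat) (a : nat) : nat := nth 0 (occ s a) 1.

Definition sym_dist (s : seq nat) (a b : nat) : nat :=
  \big[minn/pdist (first_occ s a) (first_occ s b)]_(p <- occ s a)
     \big[minn/pdist (first_occ s a) (first_occ s b)]_(q <- occ s b) pdist p q.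

Definition diameter (n : nat) (s : seq nat) : nat :=
  \max_(1 <= a < n.+1) \max_(1 <= b < n.+1 | a != b) sym_dist s a b.

Definition labeled_by_first_occ (n : nat) (s : seq nat) : Prop :=
  forall a b, 0 < a -> a < b -> b <= n -> first_occ s a < first_occ s b.

(* Main.v *)
Require Import Defs.
From mathcomp Require Import all_boot all_order all_algebra.
From mathcomp Require Import zify.
Set Implicit Arguments. Unset Strict Implicit. Unset Printing Implicit Defensive.

Lemma mem_occ s a p : (p \in occ s a) = (p < size s) && (nth 0 s p == a).
Proof. by rewrite /occ mem_filter mem_iota add0n andbC. Qed.

Lemma size_occ s a : size (occ s a) = count_mem a s.
Proof. by rewrite /occ size_filter -[in RHS](mkseq_nth 0 s) count_map. Qed.

Lemma occ_sorted s a : sorted ltn (occ s a).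
Proof. exact: (sorted_filter ltn_trans _ (iota_ltn_sorted 0 _)). Qed.

Lemma occ2 n s a : double_string n s -> 0 < a <= n ->
  occ s a = [:: first_occ s a; second_occ s a] /\ first_occ s a < second_occ s a.
Proof.
move=> [_ [_ Hc]] Ha.
have := size_occ s a; rewrite Hc // /first_occ /second_occ.
have := occ_sorted s a.
case: (occ s a) => [|x [|y [|z r]]] //= /andP[Hxy _] _; split => //.
Qed.

Lemma occ_mem n s a p : double_string n s -> 0 < a <= n ->
  (p \in occ s a) = (p == first_occ s a) || (p == second_occ s a).
Proof. by move=> H Ha; have [-> _] := occ2 H Ha; rewrite !inE. Qed.

Lemma first_in n s a : double_string n s -> 0 < a <= n ->
  (first_occ s a < 2 * n) && (nth 0 s (first_occ s a) == a).
Proof.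
move=> H Ha; have := occ_mem (first_occ s a) H Ha; rewrite eqxx mem_occ.
by case: H => -> _ ->.
Qed.

Lemma second_in n s a : double_string n s -> 0 < a <= n ->
  (second_occ s a < 2 * n) && (nth 0 s (second_occ s a) == a).
Proof.
move=> H Ha; have := occ_mem (second_occ s a) H Ha; rewrite eqxx orbT mem_occ.
by case: H => -> _ ->.
Qed.

Lemma sym_pos n s p : double_string n s -> p < 2 * n -> 0 < nth 0 s p <= n.
Proof.
move=> [Hs [Ha _]] Hp; move/allP: Ha; apply; apply: mem_nth; by rewrite Hs.
Qed.

Lemma bigmin_attain (r : seq nat) (x : nat) (F : nat -> nat) :
  \big[minn/x]_(p <- r) F p = x \/ exists2 p, p \in r & \big[minn/x]_(p<-r) F p = F p.
Proof.
elim: r => [|y r IH]; rewrite ?big_nil ?big_cons; first by left.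
case: IH => [->|[p pr ->]]; rewrite /minn; case: ltnP => _;
  first [by left | by right; exists y; rewrite ?inE ?eqxx | by right; exists p; rewrite // inE pr orbT].
Qed.

Lemma close n s a b : double_string n s -> 0 < a <= n -> 0 < b <= n -> a != b ->
  exists p q, [/\ p \in occ s a, q \in occ s b & pdist p q <= diameter n s].
Proof.
move=> H Ha Hb Hab.
have Hle : sym_dist s a b <= diameter n s.
  rewrite /diameter.
  apply: leq_trans (leq_bigmax_seq (F := fun a => \max_(1 <= b < n.+1 | a != b) sym_dist s a b) a _ _) .
  - by apply: (leq_bigmax_seq (F := fun b => sym_dist s a b)); rewrite ?mem_index_iota.
  - by rewrite mem_index_iota.
  - by [].
have Hfa : first_occ s a \in occ s a by rewrite (occ_mem _ H Ha) eqxx.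
have Hfb : first_occ s b \in occ s b by rewrite (occ_mem _ H Hb) eqxx.
move: Hle; rewrite /sym_dist.
set x := pdist (first_occ s a) (first_occ s b).
have [->|[p pin ->]] := bigmin_attain (occ s a) x
  (fun p => \big[minn/x]_(q <- occ s b) pdist p q); first by exists (first_occ s a), (first_occ s b).
have [->|[q qin ->]] := bigmin_attain (occ s b) x (fun q => pdist p q); first by exists (first_occ s a), (first_occ s b).
by exists p, q.
Qed.
Lemma cover_count s (U L : seq nat) : uniq U ->
  (forall b, b \in U -> exists2 p, p \in L & nth 0 s p = b) -> size U <= size L.
Proof.
move=> hu hc; rewrite -(size_map (nth 0 s) L); apply: uniq_leq_size => // b /hc [p pL <-].
exact: map_f.
Qed.

Lemma second_big n s : double_string n s -> 2 * diameter n s < n ->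
  forall a, 0 < a <= n -> diameter n s < second_occ s a.
Proof.
move=> H Hd a Ha; set d := diameter n s.
rewrite ltnNge; apply/negP => Hv.
set u := first_occ s a; set v := second_occ s a.
have [_ Huv] := occ2 H Ha.
have /andP[Hu1 /eqP Hu2] := first_in H Ha.
have /andP[Hv1 /eqP Hv2] := second_in H Ha.
have Hsz : size (rem u (iota 0 (v + d).+1)) = v + d.
  by rewrite size_rem ?size_iota // mem_iota; lia.
suff: n <= v + d by lia.
rewrite -Hsz -{1}(size_iota 1 n); apply: (@cover_count s (iota 1 n)); first exact: iota_uniq.
move=> b; rewrite mem_iota => Hb.
have Hb' : 0 < b <= n by lia.
case: (eqVneq b a) => [->|Hba].
  exists v => //; rewrite (mem_rem_uniq _ (iota_uniq _ _)) !inE mem_iota; lia.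
have [p [q [pin qin Hpq]]] := close H Hb' Ha Hba.
move: (pin); rewrite mem_occ => /andP[_ /eqP Hp].
exists p => //.
rewrite (mem_rem_uniq _ (iota_uniq _ _)) !inE mem_iota; apply/andP; split.
  by apply/eqP => Hpu; move: Hba; rewrite -Hp Hpu Hu2 eqxx.
move: qin; rewrite (occ_mem _ H Ha) => /orP[] /eqP Hq; rewrite -/u -/v in Hq; subst q;
  rewrite /pdist in Hpq; lia.
Qed.

Lemma first_small n s : double_string n s -> labeled_by_first_occ n s ->
  2 * diameter n s < n ->
  forall j, 0 < j <= (diameter n s).+1 -> first_occ s j < j.
Proof.
move=> H Hl Hd j Hj; set d := diameter n s in Hj *.
have Hsz : size s = 2 * n by case: H.
have Hfp : forall p, p <= d -> first_occ s (nth 0 s p) = p /\ 0 < nth 0 s p <= n.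
  move=> p Hp.
  have Hb := sym_pos H (_ : p < 2 * n); have {}Hb := Hb ltac:(lia).
  split => //.
  have : p \in occ s (nth 0 s p) by rewrite mem_occ Hsz eqxx andbT; lia.
  rewrite (occ_mem _ H Hb) => /orP[/eqP Hpf|/eqP Hps]; first exact: esym Hpf.
  have := second_big H Hd Hb; rewrite -/d; lia.
rewrite ltnNge; apply/negP => Hfj.
have Hj' : 0 < j <= n by lia.
suff: size (map (nth 0 s) (iota 0 j)) <= size (iota 1 j.-1).
  by rewrite size_map !size_iota; lia.
apply: uniq_leq_size.
  rewrite map_inj_in_uniq ?iota_uniq // => p q; rewrite !mem_iota => Hp Hq Hpq.
  have [<- _] := Hfp p ltac:(lia); have [<- _] := Hfp q ltac:(lia); by rewrite Hpq.
move=> b /mapP [p]; rewrite mem_iota => Hp ->.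
have [Hf Hb] := Hfp p ltac:(lia).
rewrite mem_iota; apply/andP; split; first lia.
rewrite ltnNge; apply/negP => Hbj.
case: (ltngtP j (nth 0 s p)) => Hc.
- have := Hl j (nth 0 s p) ltac:(lia) Hc ltac:(lia); lia.
- lia.
- by move: Hf; rewrite -Hc; lia.
Qed.
Theorem corollary3p5 (n : nat) (s : seq nat) (d : nat) :
  3 <= n ->
  double_string n s ->
  labeled_by_first_occ n s ->
  d = diameter n s ->
  2 * d < n ->
  forall i : nat, 1 <= i <= d.+1 ->
    ((count (fun j => (j != i) && (pdist (second_occ s i) (second_occ s j) <= d)%N)
            (iota 1 d.+1))%:Z
     <= (3 * d + i)%:Z - n%:Z)%R.
Proof.
move=> Hn3 H Hl Hd Hdn i Hi.
have Hsz : size s = 2 * n by case: H.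
have Hi' : 0 < i <= n by lia.
have Hfi := first_small H Hl (ltac:(rewrite -Hd; exact Hdn)) (ltac:(rewrite -Hd; exact Hi)).
set fi := first_occ s i in Hfi *; set si := second_occ s i.
have /andP[Hsi1 /eqP Hsi2] := second_in H Hi'.
have /andP[Hfi1 /eqP Hfi2] := first_in H Hi'.
set P := fun j => (j != i) && (pdist si (second_occ s j) <= d).
set J := [seq j <- iota 1 d.+1 | P j].
have HJ : forall j, j \in J -> [/\ 0 < j <= d.+1, j != i & pdist si (second_occ s j) <= d].
  move=> j; rewrite mem_filter mem_iota => /andP[/andP[H1 H2] H3]; split => //; lia.
set SJ := map (second_occ s) J.
set T := si :: SJ.
set R := iota (si - d) (2 * d + 1).
set W := [seq x <- R | x \notin T].
have HTu : uniq T.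
  rewrite /T cons_uniq; apply/andP; split.
    apply/mapP => -[j /HJ[Hj Hji _] Hsj].
    have /andP[_ /eqP] := second_in H (ltac:(lia) : 0 < j <= n).
    by rewrite -Hsj Hsi2 => Hij; move: Hji; rewrite Hij eqxx.
  rewrite map_inj_in_uniq; first by rewrite filter_uniq // iota_uniq.
  move=> j k /HJ[Hj _ _] /HJ[Hk _ _] Hjk.
  have /andP[_ /eqP <-] := second_in H (ltac:(lia) : 0 < j <= n).
  have /andP[_ /eqP <-] := second_in H (ltac:(lia) : 0 < k <= n).
  by rewrite Hjk.
have HTR : {subset T <= R}.
  move=> x; rewrite inE => /orP[/eqP ->|/mapP[j /HJ[_ _ Hj] ->]]; rewrite mem_iota; first lia.
  rewrite /pdist in Hj; lia.
have HsW : size W + size T <= 2 * d + 1.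
  have := count_predC (mem T) R.
  rewrite size_iota /W size_filter.
  have : size T <= count (mem T) R.
    rewrite -size_filter; apply: uniq_leq_size => // x xT; rewrite mem_filter; apply/andP; split => //.
    exact: HTR.
  have -> : count (fun x => x \notin T) R = count (predC (mem T)) R by [].
  lia.
have HTs : size T = (size J).+1 by rewrite /T /= size_map.
have Hmain : n <= (fi + d).+1 + size W.
  rewrite -(size_iota 1 n) -(size_iota 0 (fi + d).+1) -size_cat.
  apply: (@cover_count s (iota 1 n)); first exact: iota_uniq.
  move=> b; rewrite mem_iota => Hb.
  have Hb' : 0 < b <= n by lia.
  case: (eqVneq b i) => [->|Hbi].
    by exists fi => //; rewrite mem_cat mem_iota; apply/orP; left; lia.
  have [p [q [pin qin Hpq]]] := close H Hb' Hi' Hbi.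
  rewrite -Hd in Hpq.
  move: (pin); rewrite mem_occ => /andP[Hp1 /eqP Hp].
  move: qin; rewrite (occ_mem _ H Hi') => /orP[] /eqP Hq; rewrite -/fi -/si in Hq; subst q.
    by exists p => //; rewrite mem_cat mem_iota; apply/orP; left; rewrite /pdist in Hpq; lia.
  case: (boolP (p \in T)) => HpT.
    move: HpT; rewrite inE => /orP[/eqP Hps|/mapP[j jJ Hpj]].
      by move: Hbi; rewrite -Hp Hps Hsi2 eqxx.
    have [Hj _ _] := HJ j jJ.
    have Hj' : 0 < j <= n by lia.
    have Hfj := first_small H Hl (ltac:(rewrite -Hd; exact Hdn)) (ltac:(rewrite -Hd; exact Hj)).
    have /andP[_ /eqP Hfj2] := first_in H Hj'.
    have /andP[_ /eqP Hsj2] := second_in H Hj'.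
    exists (first_occ s j); last by rewrite Hfj2 -Hp Hpj Hsj2.
    rewrite mem_cat mem_iota; apply/orP; left; lia.
  exists p => //; rewrite mem_cat; apply/orP; right.
  rewrite mem_filter HpT /= mem_iota; rewrite /pdist in Hpq; lia.
have : (n + size J <= i + 3 * d)%N by lia.
rewrite -/P size_filter => Hc.
have Hc2 : (n + count P (iota 1 d.+1) <= i + 3 * d)%N := Hc. lia.
Qed.
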